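(* Let $G_4$ be the directed graph whose vertex set is $S_4$ (permutations in one-line notation $[u(1),u(2),u(3),u(4)]$), with a directed edge $\mathbf{u}\to\mathbf{v}$ if and only if $\max_{i\in\{1,2,3,4\}}\bigl(v^{-1}(i)-u^{-1}(i)\bigr)=1$. Let $g=(1,2,3,4)\in S_4$ (cycle notation) and $H=\langle g\rangle=\{[1,2,3,4],[2,3,4,1],[3,4,1,2],[4,1,2,3]\}$. Partition $S_4$ into the 6 cosets $\mathbf{h}H=\{\mathbf{h}\circ g^k : k=0,1,2,3\}$, where $(\mathbf{h}\circ g)(i)=h(g(i))$; concretely, the coset of $[a,b,c,d]$ is $\{[a,b,c,d],[b,c,d,a],[c,d,a,b],[d,a,b,c]\}$. Then each of these 6 sets is a dominating set of $G_4$, i.e., for each such set $D$, every vertex $\mathbf{u}\notin D$ has an edge $\mathbf{u}\to\mathbf{v}$ to some $\mathbf{v}\in D$.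
   Context: For a permutation $\mathbf{u}=[u(1),\dots,u(n)]$ in one-line notation, $u^{-1}(i)$ denotes the position of $i$ in the sequence. The quantity $\max_i(v^{-1}(i)-u^{-1}(i))$ is the rewriting cost of changing state $\mathbf{u}$ to state $\mathbf{v}$ via minimal-push-up operations. A set $D$ of vertices of a directed graph is a dominating set if every vertex not in $D$ is the initial vertex of an edge ending in a vertex of $D$. *)

(* Defs.v *)
From mathcomp Require Import all_boot all_order all_algebra all_fingroup.
Set Implicit Arguments. Unset Strict Implicit. Unset Printing Implicit Defensive.
Import GRing.Theory Num.Theory.

(* Permutations of {1,2,3,4} are modelled as 'S_4 = {perm 'I_4}, i.e. values and
   positions are shifted to {0,1,2,3}; differences of positions are unaffected. *)

Definition pos (u : 'S_4) (i : 'I_4) : int := (nat_of_ord ((u^-1)%g i))%:Z.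

Definition cost (u v : 'S_4) : int :=
  \big[Num.max/(pos v ord0 - pos u ord0)%R]_(i < 4) (pos v i - pos u i)%R.

Definition G4edge (u v : 'S_4) : bool := cost u v == 1%R.

Definition dominating (D : {set 'S_4}) : Prop :=
  forall u : 'S_4, u \notin D -> exists2 v : 'S_4, v \in D & G4edge u v.

(* g = (1,2,3,4) in cycle notation: i |-> i+1 (mod 4) *)
Definition g4 : 'S_4 := perm (@ordS_inj 4).

(* coset hH = { h o g^k : k = 0..3 }; in mathcomp (s * t) x = t (s x),
   so h o g^k is (g ^+ k * h). *)
Definition coset4 (h : 'S_4) : {set 'S_4} :=
  [set ((g4 ^+ k) * h)%g | k : 'I_4].

(* Main.v *)
Require Import Defs.
From mathcomp Require Import all_boot all_order all_algebra all_fingroup.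
Import GRing.Theory Num.Theory.

Definition o0 : 'I_4 := @Ordinal 4 0 isT.
Definition o1 : 'I_4 := @Ordinal 4 1 isT.
Definition o2 : 'I_4 := @Ordinal 4 2 isT.
Definition o3 : 'I_4 := @Ordinal 4 3 isT.

Lemma ord4_cases (i : 'I_4) : [\/ i = o0, i = o1, i = o2 | i = o3].
Proof.
case: i => [[|[|[|[|m]]]] Hm].
- by apply: Or41; apply: val_inj.
- by apply: Or42; apply: val_inj.
- by apply: Or43; apply: val_inj.
- by apply: Or44; apply: val_inj.
- by [].
Qed.

Definition w (s : 'S_4) : seq nat :=
  [:: val (s o0); val (s o1); val (s o2); val (s o3)].

Lemma vEq (s : 'S_4) (a b : 'I_4) : (val (s a) == val (s b)) = (a == b).
Proof. by rewrite (inj_eq val_inj) (inj_eq (@perm_inj _ s)). Qed.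

Lemma posE (s : 'S_4) (i : 'I_4) : val ((s^-1)%g i) = index (val i) (w s).
Proof.
have Hs : s ((s^-1)%g i) = i by rewrite permKV.
set j := (s^-1)%g i in Hs *.
rewrite -Hs /w /=.
by case: (ord4_cases j) => ->; rewrite /= ?eqxx ?vEq.
Qed.

Local Open Scope ring_scope.

Definition dL (L M : seq nat) (i : nat) : int := (index i M)%:Z - (index i L)%:Z.
Definition costL (L M : seq nat) : int :=
  Num.max (dL L M 0) (Num.max (dL L M 1) (Num.max (dL L M 2) (Num.max (dL L M 3) (dL L M 0)))).

Definition P4 := permutations (iota 0 4).

Lemma check : all (fun L => all (fun H =>
   (L \in [seq rot k H | k <- iota 0 4]) || has (fun k => costL L (rot k H) == 1) (iota 0 4)) P4) P4.
Proof. vm_compute. reflexivity. Qed.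

Lemma costE (u v : 'S_4) : cost u v = costL (w u) (w v).
Proof.
rewrite /cost !big_ord_recl big_ord0 /pos /costL /dL !posE /=.
by [].
Qed.

Lemma wP4 (u : 'S_4) : w u \in P4.
Proof.
rewrite mem_permutations.
have Hu : uniq (w u) by rewrite /w /= !inE !vEq.
apply: uniq_perm => //.
have [_ Hm] : (size (w u) = size (iota 0 4)) * (w u =i iota 0 4).
  apply: uniq_min_size => // x.
  have lt4 : forall y : 'I_4, (val y \in iota 0 4) by case=> [[|[|[|[|m]]]] Hm].
  rewrite /w !in_cons in_nil orbF => /or4P [] /eqP ->; exact: lt4.
by [].
Qed.

Lemma w_inj : injective w.
Proof.
move=> u v /= [] h0 h1 h2 h3; apply/permP => i; apply: val_inj.
by case: (ord4_cases i) => ->.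
Qed.

Lemma g4E (i : 'I_4) : val (g4 i) = ((val i).+1 %% 4)%N.
Proof. by rewrite /g4 permE. Qed.

Lemma w_rot (h : 'S_4) (k : nat) : (k < 4)%N -> w ((g4 ^+ k) * h)%g = rot k (w h).
Proof.
have G : forall i j : 'I_4, val j = ((val i).+1 %% 4)%N -> g4 i = j.
  by move=> i j Hj; apply: val_inj; rewrite g4E.
have g0 : g4 o0 = o1 by apply: G.
have g1 : g4 o1 = o2 by apply: G.
have g2 : g4 o2 = o3 by apply: G.
have g3 : g4 o3 = o0 by apply: G.
case: k => [|[|[|[|k]]]] // _; rewrite /w ?expgS ?expg0 ?mulg1 !permM ?perm1; do 3 rewrite ?g0 ?g1 ?g2 ?g3; by [].
Qed.

Theorem theorem3 : forall h : 'S_4, dominating (coset4 h).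
Proof.
move=> h u Hu.
have := check; move/allP/(_ _ (wP4 u))/allP/(_ _ (wP4 h))/orP => [] [].
  move/mapP => [k]; rewrite mem_iota add0n => Hk.
  rewrite -w_rot // => /w_inj Hue.
  by case/negP: Hu; rewrite Hue; apply/imsetP; exists (Ordinal Hk).
move/hasP => [k]; rewrite mem_iota add0n => Hk Hc.
exists ((g4 ^+ k) * h)%g.
  by apply/imsetP; exists (Ordinal Hk).
by rewrite /G4edge costE w_rot.
Qed.
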